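(* Let $p$ be prime and $H\le\mathrm{S}_n$ be in $\mathfrak{InP}(\mathrm{C}_p)$, let $\gamma$ be as in the context and $M$ a generator matrix of $\gamma(H)$. Let $I,J\subseteq\{1,\dots,k\}$ be such that there exists $\nu\in N_{\mathrm{S}_n}(H)$ with $\Omega_I^\nu=\Omega_J$. Then the rank of $M_{*,I}$ equals the rank of $M_{*,J}$. Hence the columns of $M_{*,I}$ are minimally linearly dependent if and only if the columns of $M_{*,J}$ are minimally linearly dependent.
   Context: $H\le\mathrm{S}_{n}$, $n=pk$, has orbits $\Omega_1,\dots,\Omega_k$ of size $p$ with each $G_i:=H|_{\Omega_i}$ cyclic of order $p$; $G=G_1\times\dots\times G_k$, $g_i$ a generator of $G_i$, and $\gamma:G\to\mathbb{F}_p^k$ is $\gamma(g_1^{r_1}\cdots g_k^{r_k})=(r_1,\dots,r_k)$. A generator matrix has rows forming a basis of $\gamma(H)$. For $I\subseteq\{1,\dots,k\}$, $\Omega_I=\bigcup_{i\in I}\Omega_i$ and $M_{*,I}$ is the submatrix of $M$ formed by the columns indexed by $I$. A set of vectors is minimally linearly dependent if it is linearly dependent but no proper subset is. *)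

(* Defs.v *)
From HB Require Import structures.
From mathcomp Require Import all_boot all_order all_fingroup all_algebra all_solvable.
Set Implicit Arguments. Unset Strict Implicit. Unset Printing Implicit Defensive.
Import GRing.Theory.
Local Open Scope ring_scope.

Definition Omega (n k : nat) (orb : 'I_n -> 'I_k) (i : 'I_k) : {set 'I_n} :=
  [set x | orb x == i].

Definition OmegaI (n k : nat) (orb : 'I_n -> 'I_k) (I : {set 'I_k}) : {set 'I_n} :=
  [set x | orb x \in I].

(* G_i := H|_{Omega_i}, realised as permutations of 'I_n supported on Omega_i *)
Definition Gi (n k : nat) (orb : 'I_n -> 'I_k) (H : {group {perm 'I_n}})
  (i : 'I_k) : {set {perm 'I_n}} :=
  (restr_perm (Omega orb i) @* H)%g.

Definition InPCp (p n k : nat) (orb : 'I_n -> 'I_k) (H : {group {perm 'I_n}}) :=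
  [/\ n = (p * k)%N,
      (forall x, orbit 'P H x = Omega orb (orb x)),
      (forall i, #|Omega orb i| = p) &
      (forall i, cyclic (Gi orb H i) /\ #|Gi orb H i| = p)].

Definition gammaH (p n k : nat) (orb : 'I_n -> 'I_k) (H : {group {perm 'I_n}})
  (g : 'I_k -> {perm 'I_n}) : {set 'rV['F_p]_k} :=
  [set v : 'rV['F_p]_k | [exists h in H,
      [forall i, restr_perm (Omega orb i) h == (g i ^+ (nat_of_ord (v 0 i)))%g]]].

Definition generator_matrix (p k r : nat) (Gam : {set 'rV['F_p]_k})
  (M : 'M['F_p]_(r, k)) :=
  row_free M /\ (forall v : 'rV['F_p]_k, (v <= M)%MS <-> v \in Gam).

(* M_{*,I}: the submatrix formed by the columns indexed by I (in increasing order) *)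
Definition colsI (F : Type) (r k : nat) (M : 'M[F]_(r, k)) (I : {set 'I_k}) :
  'M[F]_(r, #|I|) := colsub (fun j : 'I_#|I| => enum_val j) M.

Definition cols_free (F : fieldType) (r m : nat) (A : 'M[F]_(r, m)) := row_free A^T.

Definition cols_min_dep (F : fieldType) (r m : nat) (A : 'M[F]_(r, m)) :=
  ~ cols_free A /\
  (forall S : {set 'I_m}, S \proper [set: 'I_m] -> cols_free (colsI A S)).

(* Main.v *)
Require Import Defs.
From HB Require Import structures.
From mathcomp Require Import all_boot all_order all_fingroup all_algebra all_solvable.
Set Implicit Arguments. Unset Strict Implicit. Unset Printing Implicit Defensive.
Import GRing.Theory.
Local Open Scope ring_scope.
Lemma GL (F : fieldType) r a b (A : 'M[F]_(r,a)) (B : 'M[F]_(r,b)) :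
  (forall j, exists j' s, forall i, A i j = s * B i j') -> (\rank A <= \rank B)%N.
Proof.
move=> h; rewrite -mxrank_tr -[\rank B]mxrank_tr; apply: mxrankS; apply/row_subP => j.
have [j' [s hs]] := h j.
have -> : row j A^T = s *: row j' B^T by apply/rowP => i; rewrite !mxE hs.
by rewrite scalemx_sub // row_sub.
Qed.

Lemma R_sub (F : fieldType) r r' k (A : 'M[F]_(r,k)) (B : 'M[F]_(r',k)) T :
  (A <= B)%MS -> (\rank (colsI A T) <= \rank (colsI B T))%N.
Proof.
move/submxP => [D ->].
have -> : colsI (D *m B) T = D *m colsI B T.
  by apply/matrixP => i j; rewrite !mxE; apply eq_bigr => l _; rewrite !mxE.
exact: mxrankM_maxr.
Qed.

Lemma R_comp (F : fieldType) r k (A : 'M[F]_(r,k)) (I : {set 'I_k}) (S : {set 'I_#|I|}) :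
  \rank (colsI (colsI A I) S) = \rank (colsI A [set enum_val x | x in S]).
Proof.
apply/eqP; rewrite eqn_leq; apply/andP; split; apply: GL => j.
- have hj : enum_val (enum_val j) \in [set enum_val x | x in S].
    by apply/imsetP; exists (enum_val j) => //; exact: enum_valP.
  exists (enum_rank_in hj (enum_val (enum_val j))), 1 => i.
  by rewrite !mxE enum_rankK_in // mul1r.
- case/imsetP: (enum_valP j) => x xS ej.
  exists (enum_rank_in xS x), 1 => i.
  by rewrite !mxE ej enum_rankK_in // mul1r.
Qed.

Definition Qp (F : fieldType) r k (A : 'M[F]_(r,k)) (I : {set 'I_k}) :=
  \rank (colsI A I) <> #|I| /\
  forall T : {set 'I_k}, T \proper I -> \rank (colsI A T) = #|T|.

Lemma cols_freeE (F : fieldType) r m (A : 'M[F]_(r,m)) : cols_free A = (\rank A == m).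
Proof. by rewrite /cols_free /row_free mxrank_tr. Qed.

Lemma CMQ (F : fieldType) r k (A : 'M[F]_(r,k)) (I : {set 'I_k}) :
  cols_min_dep (colsI A I) <-> Qp A I.
Proof.
rewrite /cols_min_dep /Qp cols_freeE; split => [[h1 h2]|[h1 h2]]; split.
- by move=> e; apply: h1; rewrite e.
- move=> T TI; pose S := [set t | enum_val t \in T] : {set 'I_#|I|}.
  have eS : [set enum_val x | x in S] = T.
    apply/setP => x; apply/imsetP/idP => [[t]|xT]; first by rewrite inE => ? ->.
    have xI : x \in I := subsetP (proper_sub TI) x xT.
    by exists (enum_rank_in xI x); rewrite ?inE enum_rankK_in.
  have cS : #|S| = #|T| by rewrite -eS card_imset //; exact: enum_val_inj.
  apply/eqP; have := h2 S; rewrite cols_freeE R_comp eS cS; apply.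
  by rewrite properEcard subsetT cardsT card_ord cS (proper_card TI).
- by move/eqP/h1.
- move=> S SP; rewrite cols_freeE R_comp.
  have cS : #|[set enum_val x | x in S]| = #|S| by rewrite card_imset //; exact: enum_val_inj.
  rewrite h2 ?cS // properEcard cS.
  have := proper_card SP; rewrite cardsT card_ord => ->; rewrite andbT.
  by apply/subsetP => x /imsetP [t _ ->]; exact: enum_valP.
Qed.

Lemma Q_transport (F : fieldType) r k (A : 'M[F]_(r,k)) (tau : {perm 'I_k}) (J : {set 'I_k}) :
  (forall T : {set 'I_k}, \rank (colsI A (tau @: T)) = \rank (colsI A T)) ->
  Qp A J -> Qp A (tau @: J).
Proof.
move=> K [h1 h2]; split; first by rewrite K card_imset //; exact: perm_inj.
move=> T TJ; pose T' := (tau^-1)%g @: T.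
have eT : tau @: T' = T.
  by rewrite -imset_comp (eq_imset _ (fun x => permKV tau x)) imset_id.
have cT : #|T'| = #|T| by rewrite -eT card_imset //; exact: perm_inj.
have -> : \rank (colsI A T) = \rank (colsI A T') by symmetry; rewrite -K eT.
rewrite h2 ?cT //.
rewrite properEcard cT -(card_imset J (@perm_inj _ tau)) (proper_card TJ) andbT.
apply/subsetP => x /imsetP [y yT ->].
have := subsetP (proper_sub TJ) y yT; rewrite -{1}(permKV tau y).
by rewrite mem_imset //; exact: perm_inj.
Qed.

Definition Pm (F : fieldType) k (tau : {perm 'I_k}) (b : 'I_k -> F) : 'M[F]_k :=
  \matrix_(i, j) (if i == tau j then b j else 0).

Lemma Pm_free (F : fieldType) k (tau : {perm 'I_k}) (b : 'I_k -> F) :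
  (forall j, b j != 0) -> row_free (Pm tau b).
Proof.
move=> bnz; apply/row_freeP.
exists (\matrix_(j, i) (if i == tau j then (b j)^-1 else 0)).
apply/matrixP => i i'; rewrite !mxE (bigD1 ((tau^-1)%g i)) //= !mxE permKV eqxx.
rewrite big1 ?addr0 => [|j jne]; last first.
  rewrite !mxE; case: eqP => [ei|]; last by rewrite mul0r.
  by move: jne; rewrite ei permK eqxx.
by rewrite eq_sym; case: eqP => _; rewrite ?mulr0 ?mulfV.
Qed.

Lemma mulPm (F : fieldType) r k (M : 'M[F]_(r,k)) (tau : {perm 'I_k}) (b : 'I_k -> F) i j :
  (M *m Pm tau b) i j = b j * M i (tau j).
Proof.
rewrite !mxE (bigD1 (tau j)) //= !mxE eqxx big1 ?addr0 1?mulrC // => l lne.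
by rewrite !mxE (negbTE lne) mulr0.
Qed.

Lemma K_from (F : fieldType) r k (M C : 'M[F]_(r,k)) (tau : {perm 'I_k}) (b : 'I_k -> F) :
  (forall j, b j != 0) -> (forall i j, C i j = b j * M i (tau j)) -> (C == M)%MS ->
  forall T : {set 'I_k}, \rank (colsI M (tau @: T)) = \rank (colsI M T).
Proof.
move=> bnz hC /andP [CM MC] T.
have -> : \rank (colsI M T) = \rank (colsI C T).
  by apply/eqP; rewrite eqn_leq !R_sub.
apply/eqP; rewrite eqn_leq; apply/andP; split; apply: GL => j.
- case/imsetP: (enum_valP j) => y yT ej.
  exists (enum_rank_in yT y), (b y)^-1 => i.
  by rewrite !mxE ej enum_rankK_in // hC mulrA mulVf ?mul1r.
- have hj : tau (enum_val j) \in tau @: T by rewrite mem_imset ?enum_valP //; exact: perm_inj.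
  exists (enum_rank_in hj (tau (enum_val j))), (b (enum_val j)) => i.
  by rewrite !mxE enum_rankK_in // hC.
Qed.
Lemma orb_eqP n k (orb : 'I_n -> 'I_k) (H : {group {perm 'I_n}})
  (hO : forall x, orbit 'P H x = Omega orb (orb x)) x y :
  (y \in orbit 'P H x) = (orb y == orb x).
Proof. by rewrite hO inE. Qed.

Lemma H_orb n k (orb : 'I_n -> 'I_k) (H : {group {perm 'I_n}})
  (hO : forall x, orbit 'P H x = Omega orb (orb x)) h x :
  h \in H -> orb (h x) = orb x.
Proof. by move=> hH; apply/eqP; rewrite -(orb_eqP hO); exact: (mem_orbit 'P x hH). Qed.

Lemma H_astabs n k (orb : 'I_n -> 'I_k) (H : {group {perm 'I_n}})
  (hO : forall x, orbit 'P H x = Omega orb (orb x)) h i :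
  h \in H -> h \in ('N(Omega orb i | 'P))%g.
Proof. by move=> hH; apply/astabsP => x /=; rewrite !inE /aperm (H_orb hO). Qed.

Lemma restrE n k (orb : 'I_n -> 'I_k) (H : {group {perm 'I_n}})
  (hO : forall x, orbit 'P H x = Omega orb (orb x)) h i x :
  h \in H -> restr_perm (Omega orb i) h x = if orb x == i then h x else x.
Proof.
move=> hH; case: ifP => e.
  by rewrite restr_permE //; [exact: (H_astabs hO) | rewrite inE].
by apply: (out_perm (restr_perm_on _ _)); rewrite inE e.
Qed.

Lemma norm_orb n k (orb : 'I_n -> 'I_k) (H : {group {perm 'I_n}})
  (hO : forall x, orbit 'P H x = Omega orb (orb x)) m x y :
  m \in 'N(H)%g -> orb x = orb y -> orb (m x) = orb (m y).
Proof.
move=> mN /eqP; rewrite eq_sym -(orb_eqP hO) => /orbitP [h hH <-].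
apply/eqP; rewrite eq_sym -(orb_eqP hO); apply/orbitP; exists (h ^ m)%g.
  by rewrite memJ_norm.
by rewrite /= /aperm conjgE !permM permK.
Qed.

Lemma rep_ex n k (orb : 'I_n -> 'I_k) (hp : forall i, (0 < #|Omega orb i|)%N) :
  exists rep : 'I_k -> 'I_n, forall i, orb (rep i) = i.
Proof.
have h : forall i, exists x, orb x = i.
  by move=> i; have /card_gt0P [x] := hp i; rewrite inE => /eqP; exists x.
exact: fin_all_exists h.
Qed.

Lemma tau_ex n k (orb : 'I_n -> 'I_k) (H : {group {perm 'I_n}})
  (hO : forall x, orbit 'P H x = Omega orb (orb x)) (rep : 'I_k -> 'I_n)
  (hrep : forall i, orb (rep i) = i) nu :
  nu \in 'N(H)%g -> exists tau : {perm 'I_k}, forall x, orb ((nu^-1)%g x) = tau (orb x).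
Proof.
move=> nuN; have nuV : (nu^-1)%g \in 'N(H)%g by rewrite groupV.
pose t i := orb ((nu^-1)%g (rep i)).
have tinj : injective t.
  move=> i j e; rewrite -(hrep i) -(hrep j).
  by have := norm_orb hO nuN e; rewrite !permKV.
exists (perm tinj) => x; rewrite [RHS]permE /t.
by apply: (norm_orb hO nuV); rewrite hrep.
Qed.

Lemma conj_restr n k (orb : 'I_n -> 'I_k) (H : {group {perm 'I_n}})
  (hO : forall x, orbit 'P H x = Omega orb (orb x)) (nu : {perm 'I_n}) (tau : {perm 'I_k})
  (ht : forall x, orb ((nu^-1)%g x) = tau (orb x)) h j :
  nu \in 'N(H)%g -> h \in H ->
  restr_perm (Omega orb j) (h ^ nu)%g = ((restr_perm (Omega orb (tau j)) h) ^ nu)%g.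
Proof.
move=> nuN hH; apply/permP => x.
rewrite (restrE hO) ?memJ_norm // conjgE !permM (restrE hO) // ht (inj_eq perm_inj).
by case: eqP => // _; rewrite permKV.
Qed.
Theorem lemma5p3 (p n k r : nat) (orb : 'I_n -> 'I_k)
  (H : {group {perm 'I_n}}) (g : 'I_k -> {perm 'I_n}) (M : 'M['F_p]_(r, k))
  (I J : {set 'I_k}) :
  prime p ->
  InPCp p orb H ->
  (forall i, Gi orb H i = <[g i]>%g) ->
  generator_matrix (gammaH p orb H g) M ->
  (exists2 nu : {perm 'I_n}, nu \in 'N(H)%g &
     [set nu x | x in OmegaI orb I] = OmegaI orb J) ->
  \rank (colsI M I) = \rank (colsI M J) /\
  (cols_min_dep (colsI M I) <-> cols_min_dep (colsI M J)).
Proof.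
move=> pr [hn hO hcard hG] hgen [gfree geq] [nu nuN hnu].
have hp : forall i, (0 < #|Omega orb i|)%N by move=> i; rewrite hcard prime_gt0.
have [rep hrep] := rep_ex hp.
have [tau ht] := tau_ex hO hrep nuN.
have ordg : forall i, #[g i]%g = p by move=> i; rewrite /order -hgen (proj2 (hG i)).
have hc : forall j, exists c : nat, ((g (tau j)) ^ nu)%g = (g j ^+ c)%g.
  move=> j.
  have : g (tau j) \in Gi orb H (tau j) by rewrite hgen cycle_id.
  rewrite /Gi; case/morphimP => h hD hH ->.
  rewrite -(conj_restr hO ht) //.
  have : restr_perm (Omega orb j) (h ^ nu)%g \in Gi orb H j.
    have hnH : (h ^ nu)%g \in H by rewrite memJ_norm.
    by rewrite /Gi mem_morphim //; exact: (H_astabs hO).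
  by rewrite hgen => /cycleP.
have [c hcs] := fin_all_exists hc.
pose b j : 'F_p := (c j)%:R.
have bnz : forall j, b j != 0.
  move=> j; apply/eqP => /(congr1 val); rewrite /= val_Fp_nat // => e.
  have : ((g (tau j)) ^ nu)%g = 1%g by rewrite hcs -expg_mod_order ordg e expg0.
  move/eqP; rewrite conjg_eq1 => /eqP g1.
  have := ordg (tau j); rewrite g1 order1 => p1.
  by move: (prime_gt1 pr); rewrite -p1.
have clos : forall v, v \in gammaH p orb H g -> v *m Pm tau b \in gammaH p orb H g.
  move=> v; rewrite !inE => /existsP [h /andP [hH /forallP hv]].
  apply/existsP; exists (h ^ nu)%g; rewrite memJ_norm // hH /=; apply/forallP => j.
  rewrite (conj_restr hO ht) // (eqP (hv (tau j))) conjXg hcs -expgM mulPm.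
  have e : nat_of_ord (b j * v 0 (tau j))%R = ((c j * v 0%R (tau j)) %% #[g j]%g)%N.
    by rewrite ordg /b -{1}(natr_Zp (v 0%R (tau j))) -natrM val_Fp_nat.
  by rewrite e expg_mod_order.
have sub : (M *m Pm tau b <= M)%MS.
  apply/row_subP => i; rewrite row_mul; apply/geq; apply: clos; apply/geq; exact: row_sub.
have eqC : (M *m Pm tau b == M)%MS.
  by have [_ <-] := mxrank_leqif_eq sub; rewrite mxrankMfree ?Pm_free.
have K := K_from bnz (fun i j => mulPm M tau b i j) eqC.
have tIJ : tau @: J = I.
  apply/setP => y; rewrite -{1}(permKV tau y) mem_imset; last exact: perm_inj.
  set j := (tau^-1)%g y.
  have E1 : (j \in J) = (rep j \in OmegaI orb J) by rewrite inE hrep.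
  rewrite E1 -hnu; apply/imsetP/idP => [[x xI ex]|yI].
    by move: xI; rewrite inE -(permK nu x) -ex ht hrep /j permKV.
  exists ((nu^-1)%g (rep j)); last by rewrite permKV.
  by rewrite inE ht hrep /j permKV.
split; first by rewrite -tIJ K.
have hJ : (tau^-1)%g @: I = J.
  by rewrite -tIJ -imset_comp (eq_imset _ (permK tau)) imset_id.
have K' : forall T : {set 'I_k}, \rank (colsI M ((tau^-1)%g @: T)) = \rank (colsI M T).
  by move=> T; rewrite -K -imset_comp (eq_imset _ (permKV tau)) imset_id.
split => /CMQ h; apply/CMQ.
  by rewrite -hJ; exact: Q_transport K' h.
by rewrite -tIJ; exact: Q_transport K h.
Qed.
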